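(* Let $\mathsf V$ be a 1ESP variety and $h$ an algebraic e-generalization problem for $\mathsf V$. Then the e-generalization type of $h$ is exactly the type of $\mathscr G(h)$.
   Context: $\mathbf F_{\mathsf V}(z)$ is the free algebra of the variety $\mathsf V$ on one generator $z$. An algebra is projective in $\mathsf V$ iff it is a retract of a free algebra; exact if isomorphic to a finitely generated subalgebra of a finitely generated free algebra of $\mathsf V$. $\mathbf S$ is strongly projective if it is projective and for every embedding $i:\mathbf S\to\mathbf P$ into a projective $\mathbf P$ there is a homomorphism $j$ with $j\circ i=\mathrm{id}_{\mathbf S}$; $\mathsf V$ is 1ESP if every 1-generated exact algebra in $\mathsf V$ is strongly projective. An algebraic e-generalization problem is a homomorphism $h:\mathbf F_{\mathsf V}(z)\to\prod_{k=1}^m\mathbf E_k$ with each $\mathbf E_k$ 1-generated exact and each $p_k\circ h$ surjective. A solution of $h$ is a homomorphism $g:\mathbf F_{\mathsf V}(z)\to\mathbf P$, $\mathbf P$ finitely generated projective, with $f\circ g=h$ for some homomorphism $f$. $g\sqsubseteq g'$ iff $f\circ g'=g$ for some homomorphism $f$. A minimal complete set in a poset is a set of pairwise incomparable elements such that every element lies above one of them; the e-generalization type of $h$ is unitary/finitary/infinitary/nullary according to whether the poset of solutions modulo $\sqsubseteq$-equivalence has a minimal complete set of cardinality 1 / finite $>1$ / infinite / none. $\mathscr G(h)=\{\ker(g):g\text{ a solution}\}$; a maximal complete set in $(\mathscr G(h),\subseteq)$ is a set of pairwise incomparable elements such that every element is contained in one of them, and the type of $\mathscr G(h)$ is unitary/finitary/infinitary/nullary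 according to whether there is one of cardinality 1 / finite $>1$ / infinite / none. *)

(* Defs.v *)
From mathcomp Require Import all_boot.
Set Implicit Arguments. Unset Strict Implicit. Unset Printing Implicit Defensive.

Record signature := Signature { op : Type; arity : op -> nat }.

Section UA.
Variable sg : signature.

Record algebra := Algebra {
  carrier :> Type;
  interp : forall o : op sg, ('I_(arity o) -> carrier) -> carrier }.
Arguments interp {a} o _.

Definition is_hom (A B : algebra) (f : A -> B) : Prop :=
  forall (o : op sg) (a : 'I_(arity o) -> A),
    f (interp o a) = interp o (fun i => f (a i)).

Inductive term : Type :=
  | Var (n : nat)
  | App (o : op sg) (args : 'I_(arity o) -> term).

Fixpoint eval (A : algebra) (v : nat -> A) (t : term) : A :=
  match t with
  | Var n => v n
  | App o args => interp o (fun i => eval v (args i))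
  end.

(* A variety, presented (Birkhoff) by a set of identities. *)
Record variety := Variety { identities : term -> term -> Prop }.

Definition in_V (V : variety) (A : algebra) : Prop :=
  forall t1 t2, identities V t1 t2 -> forall v : nat -> A, eval v t1 = eval v t2.

Definition closed (A : algebra) (P : A -> Prop) : Prop :=
  forall o (a : 'I_(arity o) -> A), (forall i, P (a i)) -> P (interp o a).

Definition gen_closure (A : algebra) (S : A -> Prop) (x : A) : Prop :=
  forall P : A -> Prop, (forall y, S y -> P y) -> closed P -> P x.

Definition generated_by (A : algebra) (S : A -> Prop) : Prop :=
  forall x : A, gen_closure S x.

Definition fin_gen (A : algebra) : Prop :=
  exists n (g : 'I_n -> A), generated_by (fun y => exists i, g i = y).

Definition one_gen (A : algebra) : Prop :=
  exists a : A, generated_by (fun y => y = a).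

Lemma gen_closure_closed (A : algebra) (S : A -> Prop) : closed (gen_closure S).
Proof. move=> o a Ha P HS HP; apply: (HP o a) => i; exact: (Ha i P HS HP). Qed.

Definition gen_sub (F : algebra) (n : nat) (g : 'I_n -> F) : algebra :=
  @Algebra {x : F | gen_closure (fun y => exists i, g i = y) x}
    (fun o a => exist _ (interp o (fun i => proj1_sig (a i)))
                  (@gen_closure_closed F _ o (fun i => proj1_sig (a i))
                      (fun i => proj2_sig (a i)))).

Definition is_free (V : variety) (F : algebra) (X : Type) (ins : X -> F) : Prop :=
  in_V V F /\
  forall A : algebra, in_V V A -> forall f : X -> A,
    exists g : F -> A, [/\ is_hom g, (forall x, g (ins x) = f x) &
      forall g' : F -> A, is_hom g' -> (forall x, g' (ins x) = f x) ->
        forall y, g' y = g y].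

Definition fg_free (V : variety) (F : algebra) : Prop :=
  exists n (ins : 'I_n -> F), is_free V ins.

Definition projective (V : variety) (P : algebra) : Prop :=
  exists (X : Type) (F : algebra) (ins : X -> F) (r : F -> P) (s : P -> F),
    [/\ is_free V ins, is_hom r, is_hom s & forall x, r (s x) = x].

Definition exact (V : variety) (E : algebra) : Prop :=
  exists (F : algebra) (n : nat) (g : 'I_n -> F) (phi : E -> gen_sub g),
    [/\ fg_free V F, is_hom phi & bijective phi].

Definition strongly_projective (V : variety) (S : algebra) : Prop :=
  projective V S /\
  forall (P : algebra) (i : S -> P), projective V P -> is_hom i -> injective i ->
    exists j : P -> S, is_hom j /\ forall x, j (i x) = x.

Definition oneESP (V : variety) : Prop :=
  forall E : algebra, in_V V E -> one_gen E -> exact V E -> strongly_projective V E.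

Definition prod_alg (m : nat) (E : 'I_m -> algebra) : algebra :=
  @Algebra (forall k : 'I_m, E k) (fun o a k => interp o (fun i => a i k)).

End UA.

Section Egen.
Variables (sg : signature) (V : variety sg) (F : algebra sg) (z : F)
          (m : nat) (E : 'I_m -> algebra sg) (h : F -> prod_alg E).

(* F is F_V(z) (free on the one generator z), h is an algebraic
   e-generalization problem *)
Definition egen_problem : Prop :=
  [/\ is_free V (fun _ : unit => z), is_hom h,
      (forall k, one_gen (E k) /\ exact V (E k)) &
      (forall k (y : E k), exists x, h x k = y)].

Record solution := Solution {
  sol_P : algebra sg;
  sol_g : F -> sol_P;
  sol_hom : is_hom sol_g;
  sol_proj : projective V sol_P;
  sol_fg : fin_gen sol_P;
  sol_fact : exists f : sol_P -> prod_alg E, is_hom f /\ forall x, f (sol_g x) = h x }.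

Definition sol_le (s1 s2 : solution) : Prop :=
  exists f : sol_P s2 -> sol_P s1, is_hom f /\ forall x, f (sol_g s2 x) = sol_g s1 x.

Definition G_h (R : F -> F -> Prop) : Prop :=
  exists s : solution, forall x y, R x y <-> sol_g s x = sol_g s y.

End Egen.

Inductive gen_type := Unitary | Finitary | Infinitary | Nullary.

Section Types.
(* a preorder [le] on the elements of S satisfying D; we work in the poset
   D / (le-equivalence).  A set of classes is represented by a predicate M
   that is a union of equivalence classes. *)
Variables (S : Type) (le : S -> S -> Prop) (D : S -> Prop).

Definition pequiv (x y : S) : Prop := le x y /\ le y x.

Definition min_complete (M : S -> Prop) : Prop :=
  [/\ (forall x, M x -> D x),
      (forall x y, M x -> D y -> pequiv x y -> M y),
      (forall x y, M x -> M y -> le x y -> pequiv x y) &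
      (forall x, D x -> exists2 m, M m & le m x)].

Definition nclasses (M : S -> Prop) (n : nat) : Prop :=
  exists r : 'I_n -> S,
    [/\ (forall i, M (r i)), (forall i j, pequiv (r i) (r j) -> i = j) &
        (forall x, M x -> exists i, pequiv x (r i))].

Definition has_type (t : gen_type) : Prop :=
  match t with
  | Unitary => exists M, min_complete M /\ nclasses M 1
  | Finitary => exists M, min_complete M /\ exists n, (1 < n)%N /\ nclasses M n
  | Infinitary => exists M, min_complete M /\ forall n, ~ nclasses M n
  | Nullary => ~ exists M, min_complete M
  end.
End Types.

Definition egen_type_of sg V (F : algebra sg) m (E : 'I_m -> algebra sg)
  (h : F -> prod_alg E) (t : gen_type) : Prop :=
  has_type (@sol_le sg V F m E h) (fun _ => True) t.

(* type of (G(h), ⊆) via MAXIMAL complete sets: these are the minimal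
   complete sets for the reversed inclusion *)
Definition G_type_of sg V (F : algebra sg) m (E : 'I_m -> algebra sg)
  (h : F -> prod_alg E) (t : gen_type) : Prop :=
  has_type (fun R1 R2 : F -> F -> Prop => forall x y, R2 x y -> R1 x y)
           (@G_h sg V F m E h) t.

(* Main.v *)
Require Import Defs.
From mathcomp Require Import all_boot.
From Stdlib Require Import ClassicalEpsilon FunctionalExtensionality ProofIrrelevance Classical.
Set Implicit Arguments. Unset Strict Implicit.

Section Alg.
Variable sg : signature.

Lemma sig_eq (A : Type) (P : A -> Prop) (x y : {a | P a}) :
  proj1_sig x = proj1_sig y -> x = y.
Proof. case: x y => [x p] [y q] /= e; subst; f_equal; apply proof_irrelevance. Qed.

Definition sub_alg (A : algebra sg) (P : A -> Prop) (HP : Defs.closed P) : algebra sg :=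
  @Algebra sg {x : A | P x}
   (fun o a => exist _ (interp (o:=o) (fun i => proj1_sig (a i)))
                 (HP o (fun i => proj1_sig (a i)) (fun i => proj2_sig (a i)))).

Lemma eval_sub (A : algebra sg) (P : A -> Prop) (HP : Defs.closed P) (v : nat -> sub_alg HP) t :
  proj1_sig (eval v t) = eval (fun n => proj1_sig (v n)) t.
Proof.
elim: t => [n|o args IH] //=; congr interp; apply: functional_extensionality => i; exact: IH.
Qed.

Lemma sub_in_V V (A : algebra sg) (P : A -> Prop) (HP : Defs.closed P) :
  in_V V A -> in_V V (sub_alg HP).
Proof. move=> HV t1 t2 Ht v; apply: sig_eq; rewrite !eval_sub; exact: HV. Qed.

Lemma gen_sub_in_V V (A : algebra sg) n (g : 'I_n -> A) : in_V V A -> in_V V (gen_sub g).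
Proof. exact: (@sub_in_V V A _ (@gen_closure_closed sg A _)). Qed.

Lemma hom_eq_gen (B A : algebra sg) (S : B -> Prop) : generated_by S ->
  forall f g : B -> A, is_hom f -> is_hom g -> (forall y, S y -> f y = g y) ->
  forall y, f y = g y.
Proof.
move=> Hg f g Hf Hg' HS y; apply: (Hg y (fun y => f y = g y)) => // o a Ha.
rewrite Hf Hg'; congr interp; apply: functional_extensionality => i; exact: Ha.
Qed.

Lemma gen_mono (A : algebra sg) (S1 S2 : A -> Prop) : (forall y, S1 y -> S2 y) ->
  forall x, gen_closure S1 x -> gen_closure S2 x.
Proof. move=> H x Hx P HP Pc; apply: Hx => // y /H; exact: HP. Qed.

Lemma gen_in (A : algebra sg) (S : A -> Prop) y : S y -> gen_closure S y.
Proof. by move=> Sy P HP _; apply: HP. Qed.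

Lemma free_gen V (F : algebra sg) X (ins : X -> F) : is_free V ins ->
  generated_by (fun y => exists x, ins x = y).
Proof.
move=> [HV HU] y.
pose Sub := sub_alg (@gen_closure_closed sg F (fun y => exists x, ins x = y)).
have HVS : in_V V Sub by apply: sub_in_V.
have [g [Hg Hgi _]] := HU Sub HVS (fun x => exist _ (ins x) (gen_in (ex_intro _ x erefl))).
have [g0 [_ _ U]] := HU F HV ins.
have E1 : proj1_sig (g y) = g0 y.
  apply: (U (fun y => proj1_sig (g y))) => [o a|x]; last by rewrite Hgi.
  by rewrite Hg.
have E2 : y = g0 y by apply: (U id).
rewrite E2 -E1; exact: proj2_sig (g y).
Qed.

Lemma gen_sub_gen (F : algebra sg) n (g : 'I_n -> F) :
  generated_by (fun y : gen_sub g => exists i, proj1_sig y = g i).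
Proof.
case=> w p.
pose S := fun y => exists i, g i = y.
pose Q := fun w => gen_closure S w /\ forall p : gen_closure S w,
   gen_closure (fun y : gen_sub g => exists i, proj1_sig y = g i) (exist _ w p).
suff : Q w by case=> _; apply.
apply: (p Q).
- move=> y [i <-]; split; first exact: gen_in (ex_intro _ i erefl).
  by move=> q; apply: gen_in; exists i.
- move=> o a Ha; split; first by apply: gen_closure_closed => i; exact: (proj1 (Ha i)).
  move=> q.
  pose a' := fun i => (exist _ (a i) (proj1 (Ha i)) : gen_sub g).
  have -> : exist _ (interp (o:=o) a) q = interp (o:=o) a' by apply: sig_eq.
  apply: gen_closure_closed => i; exact: (proj2 (Ha i)).
Qed.

Lemma fin_support X (F : algebra sg) (ins : X -> F) :
  generated_by (fun y => exists x, ins x = y) ->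
  forall y, exists n (xs : 'I_n -> X), gen_closure (fun w => exists i, ins (xs i) = w) y.
Proof.
move=> Hg y; apply: (Hg y (fun y => exists n (xs : 'I_n -> X),
   gen_closure (fun w => exists i, ins (xs i) = w) y)).
- move=> _ [x <-]; exists 1, (fun _ => x); apply: gen_in; by exists ord0.
- move=> o a Ha.
  suff : forall k, k <= arity o -> exists n (xs : 'I_n -> X), forall i : 'I_(arity o),
      i < k -> gen_closure (fun w => exists i, ins (xs i) = w) (a i).
    case/(_ (arity o) (leqnn _)) => n [xs H]; exists n, xs.
    by apply: gen_closure_closed => i; apply: H.
  elim=> [|k IH] Hk.
  + have xs0 : 'I_0 -> X by case=> ?; rewrite ltn0.
    by exists 0, xs0 => i; rewrite ltn0.
  + have [n1 [xs1 H1]] := IH (ltnW Hk).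
    have [n2 [xs2 H2]] := Ha (Ordinal Hk).
    pose xs := fun j : 'I_(n1 + n2) => match split j with inl j1 => xs1 j1 | inr j2 => xs2 j2 end.
    exists (n1 + n2), xs => i; rewrite ltnS leq_eqVlt => /orP [/eqP Ei | Li].
    * have -> : i = Ordinal Hk by apply: val_inj.
      apply: gen_mono H2 => _ [j <-]; exists (rshift n1 j).
      by rewrite /xs (unsplitK (inr j)).
    * apply: gen_mono (H1 _ Li) => _ [j <-]; exists (lshift n2 j).
      by rewrite /xs (unsplitK (inl j)).
Qed.

Lemma cover X n (xs : 'I_n -> X) :
  exists m (ys : 'I_m -> X), injective ys /\ forall i, exists j, ys j = xs i.
Proof.
elim: n xs => [|n IH] xs.
  exists 0, xs; split; first by case=> ? H; exfalso; rewrite ltn0 in H.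
  by case=> ? H; exfalso; rewrite ltn0 in H.
have [m [ys [Hi Hc]]] := IH (fun i => xs (lift ord0 i)).
case: (classic (exists j, ys j = xs ord0)) => [[j0 Ej0] | Nj].
  exists m, ys; split => // i; case: (unliftP ord0 i) => [i' -> | ->]; last by exists j0.
  exact: Hc.
pose ys2 := fun u : 'I_m + 'I_1 => match u with inl j => ys j | inr _ => xs ord0 end.
have I2 : injective ys2.
  case=> [a|a] [b|b] /= e.
  - by rewrite (Hi _ _ e).
  - by case: Nj; exists a.
  - by case: Nj; exists b.
  - by rewrite (ord1 a) (ord1 b).
exists (m + 1), (fun j => ys2 (split j)); split.
  by move=> a b /I2 /(can_inj splitK).
move=> i; case: (unliftP ord0 i) => [i' -> | ->].
- have [j Ej] := Hc i'; exists (lshift 1 j); by rewrite (unsplitK (inl j)).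
- exists (rshift m ord0); by rewrite (unsplitK (inr ord0)).
Qed.


Lemma sub_free V X (FX : algebra sg) (ins : X -> FX) (Hf : is_free V ins)
  n (ys : 'I_n -> X) (Hinj : injective ys) :
  is_free V (fun i => (exist _ (ins (ys i)) (gen_in (ex_intro _ i erefl))
                       : gen_sub (fun i => ins (ys i)))).
Proof.
have [HV HU] := Hf.
split; first exact: gen_sub_in_V.
move=> A HA f.
case: (classic (inhabited A)) => [[a0] | nA].
- pose f' := fun x => match excluded_middle_informative (exists i, ys i = x) with
     | left H => f (proj1_sig (constructive_indefinite_description _ H))
     | right _ => a0 end.
  have f'E i : f' (ys i) = f i.
    rewrite /f'; case: excluded_middle_informative => [H|H]; last by case: H; exists i.
    by case: (constructive_indefinite_description _ H) => j /= /Hinj ->.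
  have [G [HG HGi _]] := HU A HA f'.
  exists (fun y => G (proj1_sig y)); split.
  + by move=> o a /=; rewrite HG.
  + by move=> i /=; rewrite HGi f'E.
  + move=> g' Hg' Hg'i y.
    apply: (hom_eq_gen (@gen_sub_gen _ _ (fun i => ins (ys i))) (f:=g') (g:=fun y => G (proj1_sig y))) => //.
      by move=> o a /=; rewrite HG.
    move=> [y0 p] [i /= Ei]; subst y0.
    have E : exist _ (ins (ys i)) p = (exist _ (ins (ys i)) (gen_in (ex_intro _ i erefl))
       : gen_sub (fun i => ins (ys i))) by apply: sig_eq.
    by rewrite E Hg'i /= HGi f'E.
- have nA' : gen_sub (fun i => ins (ys i)) -> False.
    case=> w p; apply: nA; apply: (p (fun _ => inhabited A)).
      by move=> _ [i _]; constructor; exact: f i.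
    move=> o a Ha; case: (posnP (arity o)) => [E0 | Hpos].
      constructor; apply: (interp (o:=o)) => i; exfalso; have := ltn_ord i; by rewrite [X in _ < X]E0 ltn0.
    exact: Ha (Ordinal Hpos).
  exists (fun y => False_rect _ (nA' y)); split.
  + by move=> o a; case: (nA' (interp a)).
  + by move=> x; case: nA; constructor; exact: f x.
  + by move=> g' _ _ y; case: (nA' y).
Qed.

Lemma key V (F : algebra sg) (z : F) (Hfree : is_free V (fun _ : unit => z))
  (Hesp : oneESP V) (P1 P2 : algebra sg) (g1 : F -> P1) (g2 : F -> P2) :
  is_hom g1 -> is_hom g2 -> projective V P2 ->
  (forall x y, g2 x = g2 y -> g1 x = g1 y) ->
  exists f : P2 -> P1, is_hom f /\ forall x, f (g2 x) = g1 x.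
Proof.
move=> Hg1 Hg2 [X [FX [ins [r [s [Hfx Hr Hs Hrs]]]]]] Hker.
pose w := s (g2 z).
have [n [xs Hw]] := fin_support (free_gen Hfx) w.
have [m' [ys [Hinj Hcov]]] := cover xs.
pose gs := fun i => ins (ys i).
have Hw' : gen_closure (fun u => exists i, gs i = u) w.
  apply: gen_mono Hw => _ [i <-]; have [j Ej] := Hcov i; exists j; by rewrite /gs Ej.
have HF' := sub_free Hfx Hinj.
have HVF' := HF'.1.
pose w' : gen_sub gs := exist _ w Hw'.
pose Ealg := gen_sub (fun _ : 'I_1 => w').
have HVE : in_V V Ealg by apply: gen_sub_in_V.
pose gen1 : Ealg := exist _ w' (gen_in (ex_intro _ ord0 erefl)).
have HEgen' : generated_by (fun y => y = gen1).
  move=> y; apply: gen_mono (gen_sub_gen y) => y' [i Ei]; exact: sig_eq.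
have HEex : exact V Ealg.
  exists (gen_sub gs), 1, (fun _ => w'), id; split => //.
  + by exists m', (fun i => (exist _ (ins (ys i)) (gen_in (ex_intro _ i erefl)) : gen_sub gs)).
  + by exists id.
have [_ Hsp] := Hesp Ealg HVE (ex_intro _ gen1 HEgen') HEex.
pose i : Ealg -> FX := fun e => proj1_sig (proj1_sig e).
have Hi : is_hom i by [].
have Hiinj : injective i by move=> a b e; apply: sig_eq; apply: sig_eq.
have HpFX : projective V FX.
  by exists X, FX, ins, id, id; split.
have [j [Hj Hji]] := Hsp FX i HpFX Hi Hiinj.
have [HVF HUF] := Hfree.
have [e0 [He0 He0z _]] := HUF Ealg HVE (fun _ => gen1).
have Hie : forall x, i (e0 x) = s (g2 x).
  have [g0 [_ _ U]] := HUF FX Hfx.1 (fun _ => w).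
  have H1 : is_hom (fun x => i (e0 x)).
    move=> o a; rewrite He0; reflexivity.
  have H2 : is_hom (fun x => s (g2 x)).
    by move=> o a; rewrite Hg2 Hs.
  have E1 := U _ H1 (fun u => f_equal i (He0z u)).
  have E2 := U _ H2 (fun u => erefl).
  by move=> x; rewrite E1 E2.
have surj : forall e, exists x, e0 x = e.
  move=> e; apply: (HEgen' e (fun e => exists x, e0 x = e)).
    by move=> _ ->; exists z; rewrite He0z.
  move=> o a Ha.
  exists (interp (o:=o) (fun k => proj1_sig (constructive_indefinite_description _ (Ha k)))).
  rewrite He0; congr interp; apply: functional_extensionality => k.
  exact: proj2_sig (constructive_indefinite_description _ (Ha k)).
pose c := fun e => proj1_sig (constructive_indefinite_description _ (surj e)).
have Hc : forall e, e0 (c e) = e.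
  move=> e; exact: proj2_sig (constructive_indefinite_description _ (surj e)).
have sinj : injective s by move=> a b e; rewrite -(Hrs a) -(Hrs b) e.
have wd : forall x x', e0 x = e0 x' -> g1 x = g1 x'.
  move=> x x' e; apply: Hker; apply: sinj; by rewrite -!Hie e.
exists (fun p => g1 (c (j (s p)))); split.
- move=> o a; rewrite Hs Hj.
  set b := fun k => j (s (a k)).
  have -> : interp (o:=o) b = e0 (interp (o:=o) (fun k => c (b k))).
    rewrite He0; congr interp; apply: functional_extensionality => k; by rewrite Hc.
  by rewrite (wd _ _ (Hc _)) Hg1.
- move=> x; rewrite -Hie Hji; apply: wd; exact: Hc.
Qed.

End Alg.
Section Transfer.
Variables (S T : Type) (leS : S -> S -> Prop) (leT : T -> T -> Prop) (DT : T -> Prop) (k : S -> T).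
Hypotheses (Hmono : forall a b, leS a b <-> leT (k a) (k b)) (HD : forall s, DT (k s))
  (Hsurj : forall t, DT t -> exists s, pequiv leT t (k s))
  (Hrefl : forall t, leT t t) (Htr : forall a b c, leT a b -> leT b c -> leT a c)
  (HDcl : forall t t', DT t -> pequiv leT t t' -> DT t').

Lemma peT_tr a b c : pequiv leT a b -> pequiv leT b c -> pequiv leT a c.
Proof. move=> [h1 h2] [h3 h4]; split; eauto. Qed.
Lemma peT_sym a b : pequiv leT a b -> pequiv leT b a.
Proof. by move=> [h1 h2]; split. Qed.
Lemma peS a b : pequiv leS a b <-> pequiv leT (k a) (k b).
Proof. rewrite /pequiv !Hmono; tauto. Qed.

Definition corr (MS : S -> Prop) (MT : T -> Prop) :=
  [/\ forall s, MS s <-> MT (k s), forall t, MT t -> DT t &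
      forall t t', MT t -> pequiv leT t t' -> MT t'].

Lemma corr_min MS MT : corr MS MT ->
  min_complete leS (fun _ => True) MS <-> min_complete leT DT MT.
Proof.
move=> [H1 H2 H3]; split.
- move=> [_ C2 C3 C4]; split.
  + exact: H2.
  + move=> x y Mx _; exact: H3 Mx.
  + move=> t1 t2 M1 M2 L.
    have [s1 e1] := Hsurj (H2 _ M1); have [s2 e2] := Hsurj (H2 _ M2).
    have Ms1 : MS s1 by apply/H1; exact: H3 M1 e1.
    have Ms2 : MS s2 by apply/H1; exact: H3 M2 e2.
    have : leS s1 s2.
      apply/Hmono; apply: Htr (proj2 e1) _; exact: Htr L (proj1 e2).
    move=> /(C3 _ _ Ms1 Ms2) /peS P.
    apply: peT_tr e1 _; apply: peT_tr P _; exact: peT_sym.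
  + move=> t Dt; have [s e] := Hsurj Dt.
    have [m0 Mm Lm] := C4 s I.
    exists (k m0); first exact/H1.
    apply: Htr (proj2 e); exact/Hmono.
- move=> [C1 C2 C3 C4]; split.
  + by [].
  + move=> x y Mx _ /peS P; apply/H1; apply: H3 P; exact/H1.
  + move=> x y Mx My /Hmono L; apply/peS; apply: C3 L; exact/H1.
  + move=> x _; have [t Mt Lt] := C4 _ (HD x).
    have [s e] := Hsurj (H2 _ Mt).
    exists s; first by apply/H1; exact: H3 Mt e.
    apply/Hmono; exact: Htr (proj2 e) Lt.
Qed.

Lemma corr_ncl MS MT n : corr MS MT ->
  nclasses leS MS n <-> nclasses leT MT n.
Proof.
move=> [H1 H2 H3]; split.
- move=> [r [R1 R2 R3]]; exists (fun i => k (r i)); split.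
  + by move=> i; apply/H1.
  + by move=> i j /peS /R2.
  + move=> t Mt; have [s e] := Hsurj (H2 _ Mt).
    have Ms : MS s by apply/H1; exact: H3 Mt e.
    have [i /peS P] := R3 _ Ms; exists i; exact: peT_tr e P.
- move=> [r [R1 R2 R3]].
  pose r' i := proj1_sig (constructive_indefinite_description _ (Hsurj (H2 _ (R1 i)))).
  have Er i : pequiv leT (r i) (k (r' i)) :=
    proj2_sig (constructive_indefinite_description _ (Hsurj (H2 _ (R1 i)))).
  exists r'; split.
  + move=> i; apply/H1; exact: H3 (R1 i) (Er i).
  + move=> i j /peS P; apply: R2; apply: peT_tr (Er i) _.
    apply: peT_tr P _; exact: peT_sym (Er j).
  + move=> x /H1 Mx; have [i P] := R3 _ Mx; exists i; apply/peS.
    exact: peT_tr P (Er i).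
Qed.

Lemma corr_fwd MS : min_complete leS (fun _ => True) MS ->
  corr MS (fun t => DT t /\ exists s, MS s /\ pequiv leT t (k s)).
Proof.
move=> [_ C2 _ _]; split.
- move=> s; split; first by move=> Ms; split; [exact: HD | exists s; split => //; split].
  move=> [_ [s' [Ms' P]]]; apply: C2 Ms' I _; apply/peS; exact: peT_sym.
- by move=> t [].
- move=> t t' [Dt [s [Ms P]]] P'; split; first exact: HDcl P'.
  exists s; split => //; apply: peT_tr P; exact: peT_sym.
Qed.

Lemma corr_bwd MT : min_complete leT DT MT -> corr (fun s => MT (k s)) MT.
Proof.
move=> [C1 C2 _ _]; split; [done | exact: C1 | ].
move=> t t' Mt Pq; exact: (C2 _ _ Mt (HDcl (C1 _ Mt) Pq) Pq).
Qed.

Lemma transfer_type t : has_type leS (fun _ => True) t <-> has_type leT DT t.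
Proof.
case: t => /=.
- split.
  + move=> [M [Hm Hn]]; have C := corr_fwd Hm.
    exists (fun t => DT t /\ exists s, M s /\ pequiv leT t (k s)).
    by split; [exact/(corr_min C) | exact/(corr_ncl _ C)].
  + move=> [M [Hm Hn]]; have C := corr_bwd Hm.
    by exists (fun s => M (k s)); split; [exact/(corr_min C) | exact/(corr_ncl _ C)].
- split.
  + move=> [M [Hm [n [Hn1 Hn]]]]; have C := corr_fwd Hm.
    exists (fun t => DT t /\ exists s, M s /\ pequiv leT t (k s)).
    split; first exact/(corr_min C). by exists n; split => //; exact/(corr_ncl _ C).
  + move=> [M [Hm [n [Hn1 Hn]]]]; have C := corr_bwd Hm.
    exists (fun s => M (k s)); split; first exact/(corr_min C).
    by exists n; split => //; exact/(corr_ncl _ C).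
- split.
  + move=> [M [Hm Hn]]; have C := corr_fwd Hm.
    exists (fun t => DT t /\ exists s, M s /\ pequiv leT t (k s)).
    split; first exact/(corr_min C). by move=> n /(corr_ncl _ C) /Hn.
  + move=> [M [Hm Hn]]; have C := corr_bwd Hm.
    exists (fun s => M (k s)); split; first exact/(corr_min C).
    by move=> n /(corr_ncl _ C) /Hn.
- split.
  + move=> Hn [M Hm]; apply: Hn; have C := corr_bwd Hm.
    by exists (fun s => M (k s)); exact/(corr_min C).
  + move=> Hn [M Hm]; apply: Hn; have C := corr_fwd Hm.
    by eexists; exact/(corr_min C).
Qed.
End Transfer.

Theorem corollary4p20 (sg : signature) (V : variety sg) (F : algebra sg) (z : F)
  (m : nat) (E : 'I_m -> algebra sg) (h : F -> prod_alg E) :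
  oneESP V -> egen_problem V z h ->
  forall t : gen_type, egen_type_of V h t <-> G_type_of V h t.
Proof.
move=> Hesp [Hfree _ _ _] t; rewrite /egen_type_of /G_type_of.
apply: (@transfer_type _ _ _ _ (@G_h sg V F m E h)
          (fun s x y => sol_g s x = sol_g s y)).
- move=> a b; split.
  + by move=> [f [_ Hf]] x y e; rewrite -!Hf e.
  + move=> H; exact: (key Hfree Hesp (sol_hom a) (sol_hom b) (sol_proj b) H).
- by move=> s; exists s.
- move=> R [s Hs]; exists s; split => x y; by rewrite Hs.
- by [].
- move=> a b c H1 H2 x y /H2; exact: H1.
- move=> R R' [s Hs] [p1 p2]; exists s => x y; split.
  + by move=> /p1 /Hs.
  + by move=> /Hs /p2.
Qed.
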